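(* Let $X$ be a path-connected finite down-wide poset and let $f\colon X\to\mathbb R$ be an injective Morse function. Let $a<b$ be real numbers. If $b_0(X_a)<b_0(X_b)$, then there exists a critical value $c\in(a,b]$ of $f$ such that $b_0(X_c)=b_0(X_a)+1$; moreover, the critical point $x$ with $f(x)=c$ is a minimal element of $X$.
   Context: A finite poset is regarded as a finite $T_0$-space whose open sets are down-sets; $U_x=\{y: y\le x\}$. Write $a\prec b$ if $a<b$ and there is no $c$ with $a<c<b$. $X$ is down-wide if $\#\{y:y\prec x\}\ge2$ for every non-minimal $x$. A Morse function on $X$ is a map $f\colon X\to\mathbb R$ such that for every $x$, $\#\{y: x\prec y,\ f(x)\ge f(y)\}\le1$ and $\#\{w: w\prec x,\ f(w)\ge f(x)\}\le 1$; $x$ is critical if both sets are empty, and critical values are images of critical points. For $t\in\mathbb R$, $X_t=X^f_t=\bigcup_{f(x)\le t}U_x$ (an open subposet). $b_0(Y)$ denotes the number of connected components of $Y$. *)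

(* Defs.v *)
(* Finite posets are finPOrderType; real values in an
   arbitrary realFieldType R (this covers R = the real numbers). *)
From HB Require Import structures.
From mathcomp Require Import all_boot all_order all_algebra.
Set Implicit Arguments. Unset Strict Implicit. Unset Printing Implicit Defensive.
Import Order.TTheory GRing.Theory Num.Theory.

Local Open Scope order_scope.

Section Defs.
Context {d : Order.disp_t} (T : finPOrderType d).

Definition covers (a b : T) : bool :=
  (a < b) && ~~ [exists c : T, (a < c) && (c < b)].

Definition minimalb (x : T) : bool := ~~ [exists y : T, y < x].

Definition down_wide : Prop :=
  forall x : T, ~~ minimalb x -> 2 <= #|[set y : T | covers y x]|.

Definition comp_in (A : {set T}) : rel T :=
  fun x y => [&& x \in A, y \in A & (x <= y) || (y <= x)].

(* number of connected components of the subspace A of the finite T0-space *)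
Definition b0 (A : {set T}) : nat := n_comp (comp_in A) (mem A).

(* path-connectedness of the whole finite T0-space *)
Definition path_connected : Prop :=
  forall x y : T, connect (comp_in setT) x y.

Context {R : realFieldType}.

Definition morse (f : T -> R) : Prop :=
  forall x : T,
    #|[set y : T | covers x y && (f y <= f x)%R]| <= 1 /\
    #|[set w : T | covers w x && (f x <= f w)%R]| <= 1.

Definition critical (f : T -> R) (x : T) : Prop :=
  [set y : T | covers x y && (f y <= f x)%R] = set0 /\
  [set w : T | covers w x && (f x <= f w)%R] = set0.

Definition sublevel (f : T -> R) (t : R) : {set T} :=
  [set y : T | [exists x : T, (f x <= t)%R && (y <= x)]].

End Defs.

(* Main.v *)
Require Import Defs.
From HB Require Import structures.
From mathcomp Require Import all_boot all_order all_algebra.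
Import Order.TTheory GRing.Theory Num.Theory.
Set Implicit Arguments. Unset Strict Implicit. Unset Printing Implicit Defensive.

Section Comp.
Context {d : Order.disp_t} (T : finPOrderType d).
Local Open Scope order_scope.

Lemma comp_in_sym (A : {set T}) : connect_sym (comp_in A).
Proof.
apply: sym_connect_sym => u v; rewrite /comp_in.
by case: (u \in A); case: (v \in A) => //=; rewrite orbC.
Qed.

Lemma comp_in_closed (A : {set T}) u v :
  connect (comp_in A) u v -> u \in A -> v \in A.
Proof.
move=> c uA; have cl : closed (comp_in A) (mem A).
  by move=> p q /and3P[-> -> _].
by rewrite -(closed_connect cl c).
Qed.

Lemma comp_bound (A B : {set T}) (x : T) :
  (forall u v, u \in A -> v <= u -> v \in A) ->
  B = A :|: [set y | y <= x] ->
  (b0 B <= b0 A + ~~ [exists y, (y <= x)%O && (y \in A)])%N.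
Proof.
move=> dA defB.
set e := comp_in A; set e' := comp_in B.
have sAB : A \subset B by rewrite defB subsetUl.
have xB : x \in B by rewrite defB !inE lexx orbT.
have ee' : subrel (connect e) (connect e').
  apply: connect_sub => u v /and3P[uA vA c]; apply: connect1.
  by rewrite /e' /comp_in (subsetP sAB _ uA) (subsetP sAB _ vA).
set K := [set r | roots e' r && (r \in B)].
set K0 := [set r in K | [exists u, (u \in A) && connect e' r u]].
have -> : b0 B = #|K| by rewrite /b0 /n_comp_mem; apply: eq_card => r; rewrite !inE.
rewrite -(cardsID K0 K).
set phi := fun r => fingraph.root e (odflt r [pick u | (u \in A) && connect e' r u]).
have h1 : (#|K :&: K0| <= b0 A)%N.
  have -> : K :&: K0 = K0 by apply/setIidPr; apply/subsetP => r; rewrite inE => /andP[].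
  have ph : forall r, r \in K0 -> (phi r \in A) && connect e' r (phi r) && connect e (odflt r [pick u | (u \in A) && connect e' r u]) (phi r).
    move=> r; rewrite !inE => /andP[_ /existsP[u0 Hu0]].
    rewrite /phi; case: pickP => [u /andP[uA cru]|/(_ u0)]; last by rewrite Hu0.
    have cu := fingraph.connect_root e u.
    rewrite /= (comp_in_closed cu uA) /=.
    by rewrite (connect_trans cru (ee' _ _ cu)) cu.
  rewrite -(@card_in_imset _ _ phi K0).
    rewrite /b0 /n_comp_mem; apply: subset_leq_card; apply/subsetP => z /imsetP[r rK0 ->].
    have /andP[/andP[pA _] _] := ph r rK0.
    by rewrite !inE /phi (fingraph.roots_root (comp_in_sym A)) /=; exact: pA.
  move=> r1 r2 r1K r2K eq12.
  have /andP[/andP[_ c1] _] := ph r1 r1K.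
  have /andP[/andP[_ c2] _] := ph r2 r2K.
  move: r1K r2K; rewrite !inE => /andP[/andP[/eqP rt1 _] _] /andP[/andP[/eqP rt2 _] _].
  rewrite -rt1 -rt2; apply/(fingraph.rootP (comp_in_sym B)).
  apply: connect_trans c1 _; rewrite eq12 (comp_in_sym B); exact: c2.
have h2 : (#|K :\: K0| <= ~~ [exists y, (y <= x)%O && (y \in A)])%N.
  have sub : K :\: K0 \subset [set fingraph.root e' x].
    apply/subsetP => r; rewrite !inE => /andP[nK0 /andP[rt rB]].
    have rA : r \notin A.
      apply: contra nK0 => rA; rewrite rt rB /=.
      by apply/existsP; exists r; rewrite rA connect0.
    have rx : (r <= x)%O by move: rB; rewrite defB !inE (negbTE rA).
    have crx : connect e' r x by apply: connect1; rewrite /e' /comp_in rB xB rx.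
    rewrite -(eqP rt); apply/eqP/(fingraph.rootP (comp_in_sym B)) => //.
  case: (boolP [exists y, _]) => /= [/existsP[y /andP[yx yA]]|_].
    rewrite leqn0 cards_eq0; apply/eqP/setP => r; rewrite !inE.
    apply/negbTE; apply/negP => /andP[nK0 /andP[rt rB]].
    move/subsetP: sub => /(_ r); rewrite !inE nK0 rt rB /= => /(_ isT) /eqP rr.
    move: nK0; rewrite rt rB /=; apply/negP; rewrite negbK.
    apply/existsP; exists y; rewrite yA /=.
    have cxy : connect e' x y by apply: connect1; rewrite /e' /comp_in xB (subsetP sAB _ yA) yx orbT.
    apply: connect_trans cxy; rewrite rr (comp_in_sym B); exact: fingraph.connect_root.
  by rewrite -(cards1 (fingraph.root e' x)); apply: subset_leq_card.
exact: leq_add.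
Qed.
End Comp.
Local Open Scope ring_scope.
Section Sub.
Context {d : Order.disp_t} (T : finPOrderType d) (R : realFieldType) (f : T -> R).

Lemma sub_eq (t1 t2 : R) : t1 <= t2 -> (forall z, ~~ ((t1 < f z) && (f z <= t2))) ->
  sublevel f t1 = sublevel f t2.
Proof.
move=> le12 H; apply/setP => y; rewrite !inE; apply/existsP/existsP => -[z /andP[fz yz]];
  exists z; rewrite yz andbT.
  exact: le_trans fz le12.
by move: (H z); rewrite fz andbT -leNgt.
Qed.

Lemma sub_down (t : R) u v : u \in sublevel f t -> (v <= u)%O -> v \in sublevel f t.
Proof.
rewrite !inE => /existsP[z /andP[fz uz]] vu; apply/existsP; exists z.
by rewrite fz (le_trans vu uz).
Qed.
End Sub.
Unset Implicit Arguments.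
Theorem mainTheorem8 (d : Order.disp_t) (T : finPOrderType d) (R : realFieldType)
    (f : T -> R) (a b : R) :
  path_connected T -> down_wide T -> morse f -> injective f -> a < b ->
  (b0 (sublevel f a) < b0 (sublevel f b))%N ->
  exists x : T,
    [/\ critical f x, a < f x <= b,
        b0 (sublevel f (f x)) = (b0 (sublevel f a)).+1
      & minimalb x].
Proof.
move=> _ dw mf finj ab hb.
have [z1 [Pz1 hz1]] : exists z1, ((a < f z1) && (f z1 <= b)) /\ (b0 (sublevel f a) < b0 (sublevel f (f z1)))%N.
  case: (boolP [exists z, (a < f z) && (f z <= b)]) => [/existsP[z0 Pz0]|none].
    case: (@arg_maxP _ _ _ z0 (fun z => (a < f z) && (f z <= b)) f Pz0) => m Pm Hmax.
    exists m; split => //.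
    rewrite (@sub_eq _ _ _ f (f m) b) //; first by case/andP: Pm.
    move=> z; apply/negP => /andP[lt zb].
    have := Hmax z; rewrite (lt_trans (proj1 (andP Pm)) lt) zb => /(_ isT).
    by rewrite /= leNgt lt.
  move: hb; rewrite (@sub_eq _ _ _ f a b) ?ltnn // ?(ltW ab) //.
  by move=> z; apply/negP => Pz; move/existsP: none; apply; exists z.
set P2 := fun z => [&& a < f z, f z <= b & (b0 (sublevel f a) < b0 (sublevel f (f z)))%N].
have P2z1 : P2 z1 by rewrite /P2 hz1 andbT.
case: (@arg_minP _ _ _ z1 P2 f P2z1) => x P2x Hmin.
have /and3P[ax xb hx] := P2x.
have [t0 [ht0 eqt0]] : exists t0, (b0 (sublevel f t0) <= b0 (sublevel f a))%N /\
    forall z, (f z <= t0) = (f z < f x).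
  case: (boolP [exists z, (a < f z) && (f z < f x)]) => [/existsP[z0 Pz0]|none].
    case: (@arg_maxP _ _ _ z0 (fun z => (a < f z) && (f z < f x)) f Pz0) => w /andP[aw wx] Hmax.
    exists (f w); split.
      rewrite leqNgt; apply/negP => hw.
      have : P2 w by rewrite /P2 aw hw (le_trans (ltW wx) xb).
      by move/Hmin; rewrite leNgt wx.
    move=> z; apply/idP/idP => [zw|zx]; first exact: le_lt_trans zw wx.
    case: (leP (f z) a) => [za|az]; first exact: le_trans za (ltW aw).
    by apply: Hmax; rewrite az zx.
  exists a; split => // z; apply/idP/idP => [za|zx]; first exact: le_lt_trans za ax.
  rewrite leNgt; apply/negP => az; move/existsP: none; apply; exists z.
  by rewrite az zx.
have defX : sublevel f (f x) = sublevel f t0 :|: [set y | (y <= x)%O].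
  apply/setP => y; rewrite !inE; apply/existsP/orP.
    case=> z /andP[zx yz]; move: zx; rewrite le_eqVlt => /orP[/eqP/finj zxe|zx].
      by right; rewrite -zxe.
    by left; apply/existsP; exists z; rewrite eqt0 zx.
  case=> [/existsP[z /andP[zt yz]]|yx].
    by exists z; rewrite yz andbT (ltW _) // -eqt0.
  by exists x; rewrite lexx.
have cb := @comp_bound _ _ (sublevel f t0) (sublevel f (f x)) x (@sub_down _ _ _ f t0) defX.
move: cb; case: (boolP [exists y, (y <= x)%O && (y \in sublevel f t0)]) => /= [_|nE] cb.
  by move: (leq_trans cb (leq_trans (leq_add ht0 (leqnn 0)) (leqnn _))); rewrite addn0 leqNgt hx.
have hbeq : b0 (sublevel f (f x)) = (b0 (sublevel f a)).+1.
  apply/eqP; rewrite eqn_leq hx andbT; apply: leq_trans cb _.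
  by rewrite addn1 ltnS.
have below : forall y, (y <= x)%O -> f x <= f y.
  move=> y yx; rewrite leNgt; apply/negP => yfx; move/existsP: nE; apply; exists y.
  rewrite yx /= inE; apply/existsP; exists y; rewrite lexx andbT eqt0 yfx //.
have minx : minimalb x.
  case: (boolP (minimalb x)) => // nm.
  have two := dw x nm. have hm := proj2 (mf x).
  have : (#|[set y | covers y x]| <= #|[set w | covers w x && (f x <= f w)%R]|)%N.
    apply: subset_leq_card; apply/subsetP => w; rewrite !inE => cw; rewrite cw /=.
    by apply: below; move: cw => /andP[/ltW].
  by move=> h; have := leq_trans two (leq_trans h hm).
exists x; split => //; last by rewrite ax xb.
split; apply/setP => y; rewrite !inE; apply/negbTE; apply/negP => /andP[/andP[cv _] fy].
  have yx : y != x by apply: contraTneq cv => ->; rewrite ltxx.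
  have fyx : f y < f x by rewrite lt_neqAle fy andbT; apply: contra yx => /eqP/finj ->.
  move/existsP: nE; apply; exists x; rewrite lexx /= inE; apply/existsP; exists y.
  by rewrite eqt0 fyx /= ltW.
by move/negP: minx; apply; apply/existsP; exists y.
Qed.
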